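(* Let $I=\langle N,M,V\rangle$ be an ordered instance of goods with $n$ agents and $m = n + c$ goods, where $n > c > 0$. Then $v_{ij} \ge \mu_i$ for every agent $i\in N$ and every good $j \in \{1, 2, \dots, n - c\}$.
   Context: An instance $I=\langle N,M,V\rangle$ has agents $N=\{1,\dots,n\}$, goods $M=\{1,\dots,m\}$ and additive valuations $v_i$ with $v_i(\emptyset)=0$, $v_i(S)=\sum_{g\in S}v_i(\{g\})$, $v_{ij}:=v_i(\{j\})\ge 0$. It is ordered if $v_{ij}\ge v_{i(j+1)}$ for all $i\in N$ and $1\le j<m$. An allocation ($n$-partition) is an ordered $n$-tuple of pairwise disjoint, possibly empty subsets of $M$ with union $M$. The maximin share of $i$ is $\mu_i=\max_A\min_j v_i(A_j)$ over all allocations $A$. *)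

(* Defs.v *)
From HB Require Import structures.
From mathcomp Require Import all_boot all_order all_algebra.
Set Implicit Arguments. Unset Strict Implicit. Unset Printing Implicit Defensive.
Import Order.TTheory GRing.Theory Num.Theory.
Local Open Scope ring_scope.

Section Fair.
Variable R : realFieldType.

(* Agents are 'I_n (agent i+1 in the paper is index i), goods are 'I_m
   (good j+1 in the paper is index j).  A valuation profile gives v i j = v_{ij}. *)

Definition bval (n m : nat) (v : 'I_n -> 'I_m -> R) (i : 'I_n) (S : {set 'I_m}) : R :=
  \sum_(g in S) v i g.

Definition nonneg_vals (n m : nat) (v : 'I_n -> 'I_m -> R) : Prop :=
  forall i j, 0 <= v i j.

Definition ordered_inst (n m : nat) (v : 'I_n -> 'I_m -> R) : Prop :=
  forall (i : 'I_n) (j k : 'I_m), nat_of_ord k = (nat_of_ord j).+1 -> v i k <= v i j.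

Definition is_allocation (n m : nat) (A : {ffun 'I_n -> {set 'I_m}}) : bool :=
  [forall k, forall l, (k != l) ==> [disjoint A k & A l]]
  && (\bigcup_(k < n) A k == [set: 'I_m]).

(* minimum / maximum of a finite nonempty list of reals (0 on the empty list,
   never used in the statement since n > 0 and allocations exist) *)
Definition seqmin (s : seq R) : R :=
  if s is x :: s' then foldr Num.min x s' else 0.
Definition seqmax (s : seq R) : R :=
  if s is x :: s' then foldr Num.max x s' else 0.

Definition mms (n m : nat) (v : 'I_n -> 'I_m -> R) (i : 'I_n) : R :=
  seqmax [seq seqmin [seq bval v i (A k) | k <- enum 'I_n]
         | A : {ffun 'I_n -> {set 'I_m}} <- enum {ffun 'I_n -> {set 'I_m}} & is_allocation A].

End Fair.

(* Main.v *)
Require Import Defs.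
From HB Require Import structures.
From mathcomp Require Import all_boot all_order all_algebra.
From mathcomp Require Import zify.
Import Order.TTheory GRing.Theory Num.Theory.
Local Open Scope ring_scope.

Lemma sum_card_disj n (T : finType) (F : 'I_n -> {set T}) (r : seq 'I_n) :
  uniq r -> (forall k l, k != l -> [disjoint F k & F l]) ->
  (\sum_(k <- r) #|F k| = #|\bigcup_(k <- r) F k|)%N.
Proof.
move=> Hu Hd; elim: r Hu => [|a r IH] /=; first by rewrite !big_nil cards0.
case/andP=> ar ur; rewrite !big_cons cardsU IH //.
suff -> : F a :&: \bigcup_(k <- r) F k = set0 by rewrite cards0 subn0.
apply/setP=> x; rewrite !inE bigcup_seq; apply/negP => /andP[xa /bigcupP[k kr xk]].
have ak : a != k by apply/eqP=> E; rewrite E kr in ar.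
by rewrite (disjointFr (Hd _ _ ak) xa) in xk.
Qed.

Lemma mono_ord (R : realFieldType) m (w : 'I_m -> R) :
  (forall j k : 'I_m, nat_of_ord k = (nat_of_ord j).+1 -> w k <= w j) ->
  forall d (a b : 'I_m), nat_of_ord b = (a + d)%N -> w b <= w a.
Proof.
move=> H; elim=> [|d IH] a b E.
  by rewrite addn0 in E; have -> : b = a by apply: val_inj.
have hb := ltn_ord b.
have hc : (a + d < m)%N by rewrite E in hb; lia.
apply: le_trans (IH a (Ordinal hc) erefl); apply: H => /=; lia.
Qed.

Lemma foldr_max_le (R : realFieldType) (x b : R) s :
  x <= b -> (forall y, y \in s -> y <= b) -> foldr Num.max x s <= b.
Proof.
move=> hx; elim: s => [|y s IH] //= H.
rewrite ge_max H ?mem_head //= IH // => z zs; apply: H; by rewrite in_cons zs orbT.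
Qed.

Lemma foldr_min_le (R : realFieldType) (x b : R) s :
  (x <= b \/ exists2 y, y \in s & y <= b) -> foldr Num.min x s <= b.
Proof.
elim: s => [|y s IH] /=; first by case=> // -[].
case=> [hx|[z]]; rewrite ge_min.
  by rewrite IH ?orbT //; left.
rewrite in_cons => /orP[/eqP->->//|zs zb]; rewrite IH ?orbT //; right; by exists z.
Qed.

Theorem lemma9 (R : realFieldType) (n c : nat) (v : 'I_n -> 'I_(n + c) -> R) :
  (0 < c)%N -> (c < n)%N ->
  nonneg_vals v -> ordered_inst v ->
  forall (i : 'I_n) (j : 'I_(n + c)), (nat_of_ord j < n - c)%N ->
    mms v i <= v i j.
Proof.
move=> c0 cn nn ord i j hj.
have mono : forall a b : 'I_(n + c), (a <= b)%N -> v i b <= v i a.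
  move=> a b ab; apply: (@mono_ord _ _ _ (ord i) (b - a)%N a b); lia.
rewrite /mms.
set s := [seq _ | _ <- _ & _].
have key : forall y, y \in s -> y <= v i j.
  move=> y /mapP[A]; rewrite mem_filter => /andP[alloc _] ->.
  case/andP: alloc => /forallP Hd /eqP Hcov.
  have Hd' : forall k l, k != l -> [disjoint A k & A l].
    by move=> k l kl; move/forallP: (Hd k) => /(_ l) /implyP; apply.
  have [/existsP[k hk]|none] := boolP [exists k, bval v i (A k) <= v i j].
    case: (enum 'I_n) (mem_enum 'I_n k) => [|x s'] //= /[!in_cons].
    move=> hk'; apply: foldr_min_le.
    case/orP: hk' => [/eqP <-|ks]; first by left.
    by right; exists (bval v i (A k)) => //; apply: map_f.
  exfalso.
  have hjm : (j <= n + c)%N by apply: ltnW.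
  pose L := [set widen_ord hjm g | g : 'I_j].
  have cardL : (#|L| <= j)%N by rewrite (leq_trans (leq_imset_card _ _)) // card_ord.
  have per : forall k, (2 <= #|A k| + #|A k :&: L|)%N.
    move=> k; have hk : v i j < bval v i (A k).
      by rewrite ltNge; apply/negP=> H; move/negP: none; apply; apply/existsP; exists k.
    case E: #|A k| => [|[|q]] //.
    - move/cards0_eq: E => E; rewrite /bval E big_set0 in hk.
      by move: (nn i j); rewrite leNgt hk.
    - have /cards1P[g Eg] : #|A k| == 1%N by rewrite E.
      rewrite /bval Eg big_set1 in hk.
      have gj : (g < j)%N.
        by rewrite ltnNge; apply/negP=> /mono H; move: hk; rewrite ltNge H.
      suff gin : g \in A k :&: L.
        by have : (0 < #|A k :&: L|)%N by apply/card_gt0P; exists g.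

      rewrite inE Eg set11 /=; apply/imsetP; exists (Ordinal gj) => //.
      by apply: val_inj.
  have S1 : (\sum_(k < n) #|A k| <= n + c)%N.
    rewrite (@sum_card_disj _ _ A _ (index_enum_uniq _) Hd').
    by rewrite (leq_trans (max_card _)) // card_ord.
  have S2 : (\sum_(k < n) #|A k :&: L| <= j)%N.
    rewrite (@sum_card_disj _ _ (fun k => A k :&: L) _ (index_enum_uniq _)).
      apply: leq_trans cardL; apply: subset_leq_card.
      apply/subsetP=> x; rewrite bigcup_seq => /bigcupP[k _]; rewrite inE => /andP[_ //].
    move=> k l kl; rewrite -setI_eq0.
    have := disjoint_setI0 (Hd' _ _ kl) => E.
    apply/eqP/setP=> x; rewrite !inE; apply/negP=> H; case/andP: H => /andP[xk _] /andP[xl _].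
    by have := Hd' _ _ kl; move/disjointFr/(_ xk); rewrite xl.
  have S3 : (\sum_(k < n) 2 <= \sum_(k < n) (#|A k| + #|A k :&: L|))%N.
    by apply: leq_sum => k _; apply: per.
  rewrite big_split /= sum_nat_const card_ord in S3.
  have := leq_trans S3 (leq_add S1 S2); lia.
have v0 := nn i j.
case: s key => [|x s'] //= H; apply: foldr_max_le => [|y ys]; apply: H;
  rewrite in_cons ?eqxx // ys orbT //.
Qed.
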